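(* Let $q$ be a prime power and $n\ge3$. Then $\chi_{n-1}\!\left(\binom n2\times n,q\right)\ge q^n-1$.
   Context: For positive integers $N\ge n$, $\mathbb{F}_q^{N\times n}$ is the set of $N\times n$ matrices over $\mathbb{F}_q$. An exactly $d$-distance coloring is a map $\Gamma:\mathbb{F}_q^{N\times n}\to\{1,\dots,L\}$ such that $\Gamma(M_1)\ne\Gamma(M_2)$ whenever $\mathrm{Rk}(M_1-M_2)=d$. $\chi_d(N\times n,q)$ denotes the minimum number $L$ of colors in an exactly $d$-distance coloring; here $N=\binom n2$. *)

(* Defs.v *)
From HB Require Import structures.
From mathcomp Require Import all_boot all_order all_algebra all_field.
Set Implicit Arguments. Unset Strict Implicit. Unset Printing Implicit Defensive.
Import GRing.Theory.
Local Open Scope ring_scope.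

Definition exactly_distance_coloring (F : fieldType) (N n d L : nat)
  (Gamma : 'M[F]_(N, n) -> 'I_L) : Prop :=
  forall M1 M2 : 'M[F]_(N, n), \rank (M1 - M2) = d -> Gamma M1 <> Gamma M2.

Arguments exactly_distance_coloring {F N n} d {L} Gamma.

(* Main.v *)
Require Import Defs.
From HB Require Import structures.
From mathcomp Require Import all_boot all_order all_algebra all_field.
From mathcomp Require Import ring lra zify.
Set Implicit Arguments. Unset Strict Implicit. Unset Printing Implicit Defensive.
Import GRing.Theory.
Local Open Scope ring_scope.

Definition PA n := [set t : 2.-tuple 'I_n | sorted ltn [seq val i | i <- t]].
Lemma cardPA n : #|PA n| = 'C(n,2).
Proof. exact: card_ltn_sorted_tuples. Qed.
Definition pr n (r : 'I_('C(n,2))) : 2.-tuple 'I_n :=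
  enum_val (cast_ord (esym (cardPA n)) r).

Definition Mw (F : fieldType) n (v : 'rV[F]_n) : 'M[F]_('C(n,2), n) :=
  \matrix_(r, c) (v 0 (tnth (pr r) ord0) * (c == tnth (pr r) ord_max)%:R
                - v 0 (tnth (pr r) ord_max) * (c == tnth (pr r) ord0)%:R).

Lemma Mw_sub (F : fieldType) n (v w : 'rV[F]_n) : Mw v - Mw w = Mw (v - w).
Proof. apply/matrixP => r c; rewrite !mxE; ring. Qed.

Lemma sum_ind (F : fieldType) n (j : 'I_n) (f : 'I_n -> F) :
  \sum_c f c * (c == j)%:R = f j.
Proof.
rewrite (bigD1 j) //= eqxx mulr1 big1 ?addr0 // => c /negbTE ->.
by rewrite mulr0.
Qed.

Lemma Mw_mul (F : fieldType) n (v u : 'rV[F]_n) r :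
  (Mw v *m u^T) r 0 = v 0 (tnth (pr r) ord0) * u 0 (tnth (pr r) ord_max)
                      - v 0 (tnth (pr r) ord_max) * u 0 (tnth (pr r) ord0).
Proof.
rewrite mxE.
rewrite (eq_bigr (fun c => v 0 (tnth (pr r) ord0) * (u 0 c * (c == tnth (pr r) ord_max)%:R)
   - v 0 (tnth (pr r) ord_max) * (u 0 c * (c == tnth (pr r) ord0)%:R))); last first.
  by move=> c _; rewrite !mxE; ring.
by rewrite sumrB -!mulr_sumr !sum_ind.
Qed.

Lemma pr_surj n (i j : 'I_n) : (i < j)%N ->
  exists r, tnth (pr r) ord0 = i /\ tnth (pr r) ord_max = j.
Proof.
move=> ij.
pose s := [tuple i; j].
have sA : s \in PA n by rewrite inE /= ij.
exists (cast_ord (cardPA n) (enum_rank_in sA s)).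
rewrite /pr cast_ordK enum_rankK_in //.
Qed.

Lemma Mw_rank (F : fieldType) n (v : 'rV[F]_n) : v != 0 -> \rank (Mw v) = (n - 1)%N.
Proof.
move=> vnz.
set A := (Mw v)^T.
have kv : (kermx A == v)%MS.
  apply/andP; split; last first.
    rewrite sub_kermx; apply/eqP; apply: trmx_inj; rewrite trmx_mul trmxK trmx0.
    by apply/matrixP => r c; rewrite ord1 Mw_mul mxE mulrC subrr.
  apply/row_subP => i.
  have : row i (kermx A) *m A = 0 by rewrite -row_mul mulmx_ker row0.
  move: (row i (kermx A)) => u.
  move/(congr1 trmx); rewrite trmx_mul trmxK trmx0 => H.
  have Hr r : v 0 (tnth (pr r) ord0) * u 0 (tnth (pr r) ord_max)
                      = v 0 (tnth (pr r) ord_max) * u 0 (tnth (pr r) ord0).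
    by apply/eqP; rewrite -subr_eq0 -Mw_mul H mxE.
  have [k vk] : exists k, v 0 k != 0.
    apply/existsP; apply: contraR vnz => /existsPn H0.
    by apply/eqP/matrixP => a b; rewrite ord1 mxE; apply/eqP; rewrite -[_ == _]negbK H0.
  apply/sub_rVP; exists (u 0 k / v 0 k).
  apply/matrixP => a j; rewrite ord1 mxE.
  apply: (mulfI vk).
  rewrite mulrA mulrCA divff // mulr1.
  case: (ltngtP k j) => [kj|jk|/val_inj ->]; last by rewrite mulrC.
  - by have [r [<- <-]] := pr_surj kj; rewrite Hr mulrC.
  - by have [r [<- <-]] := pr_surj jk; rewrite -Hr mulrC.
have := mxrank_ker A.
rewrite (eqmx_rank kv) rank_rV vnz mxrank_tr => h.
have := rank_leq_row A; rewrite mxrank_tr => le.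
simpl in h; lia.
Qed.

Local Close Scope ring_scope.
Theorem proposition4p3 (F : finFieldType) (n : nat) (hn : 3 <= n)
  (L : nat) (Gamma : 'M[F]_('C(n, 2), n) -> 'I_L) :
  exactly_distance_coloring (n - 1) Gamma ->
  #|F| ^ n - 1 <= L.
Proof.
move=> col.
have inj : injective (fun v : 'rV[F]_n => Gamma (Mw v)).
  move=> v w /= e; apply/eqP; apply: contraT => ne.
  have rk : \rank (Mw v - Mw w)%R = (n - 1)%N.
    by rewrite Mw_sub Mw_rank // subr_eq0.
  by have := col _ _ rk.
have h := leq_card _ inj.
rewrite card_ord in h.
have e : #|'rV[F]_n| = (#|F| ^ n)%N by rewrite card_mx mul1n.
rewrite e in h.
apply: leq_trans h; exact: leq_subr.
Qed.
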